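(* Let $\Lambda$ be a full-rank lattice in $\mathbb{R}^n$ with successive minima $\lambda_1,\dots,\lambda_n$. Then there exists a basis $\boldsymbol{v}^1,\dots,\boldsymbol{v}^n$ of $\Lambda$ such that (i) $|\boldsymbol{v}^s|_2\ll_n\lambda_s$ for $s=1,\dots,n$ (implied constant depending only on $n$); and (ii) $\mathfrak{I}(\boldsymbol{v}^s)\subseteq\mathfrak{I}(\boldsymbol{v}^{s+1})$ for $s=1,\dots,n-1$.
   Context: For $\boldsymbol{v}\in\mathbb{R}^n$, $\mathfrak{I}(\boldsymbol{v}):=\{h\in\{1,\dots,n\}:v_h\neq0\}$ is the set of indices of nonzero coordinates. $|\cdot|_2$ is the Euclidean norm. The $s$-th successive minimum of $\Lambda$ is the infimum of $r>0$ such that $\Lambda\cap B(\boldsymbol{0},r)$ contains $s$ linearly independent vectors. A basis of $\Lambda$ means linearly independent vectors generating $\Lambda$ as an abelian group. *)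

(* Defs.v *)
From HB Require Import structures.
From mathcomp Require Import all_boot all_order all_algebra.
From mathcomp Require Import boolp classical_sets reals.
Set Implicit Arguments. Unset Strict Implicit. Unset Printing Implicit Defensive.
Import Order.TTheory GRing.Theory Num.Theory.
Local Open Scope ring_scope.
Local Open Scope classical_set_scope.

Definition euclid (R : realType) (n : nat) (v : 'rV[R]_n) : R :=
  Num.sqrt (\sum_(i < n) v 0 i ^+ 2).

Definition nzidx (R : realType) (n : nat) (v : 'rV[R]_n) : set 'I_n :=
  [set h | v 0 h != 0].

Definition lattice (R : realType) (n : nat) (B : 'M[R]_n) : set 'rV[R]_n :=
  [set v | exists z : 'rV[int]_n, v = map_mx (fun x : int => x%:~R) z *m B].

Definition succ_min (R : realType) (n : nat) (L : set 'rV[R]_n) (k : nat) : R :=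
  inf [set r : R | 0 < r /\
        exists w : 'I_k -> 'rV[R]_n,
          (forall i, L (w i) /\ euclid (w i) < r) /\
          row_free (\matrix_(i < k) w i)].

Definition is_lattice_basis (R : realType) (n : nat) (L : set 'rV[R]_n)
    (V : 'M[R]_n) : Prop :=
  row_free V /\ (forall s : 'I_n, L (row s V)) /\
  (forall v, L v -> exists z : 'rV[int]_n,
       v = map_mx (fun x : int => x%:~R) z *m V).

(* Main.v *)
Require Import Defs.
From HB Require Import structures.
From mathcomp Require Import all_boot all_order all_algebra.
From mathcomp Require Import boolp classical_sets reals.
From mathcomp Require Import lra zify ring.
Set Implicit Arguments. Unset Strict Implicit. Unset Printing Implicit Defensive.
Import Order.TTheory GRing.Theory Num.Theory.
Local Open Scope ring_scope.
Local Open Scope classical_set_scope.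
Definition N1 (R : realType) (n : nat) (v : 'rV[R]_n) : R := \sum_i `|v 0 i|.

Definition ics (R : realType) (n : nat) (V : 'M[R]_n) (P : pred 'I_n) (v : 'rV[R]_n) : Prop :=
  exists z : 'I_n -> int, (forall j, z j != 0 -> P j) /\ v = \sum_j (z j)%:~R *: row j V.

Definition icomb (R : realType) (n : nat) (V : 'M[R]_n) := ics V predT.

Lemma ics_ind (R : realType) (n : nat) (V : 'M[R]_n) (P : pred 'I_n) (S : set 'rV[R]_n) :
  S 0 -> (forall x y, S x -> S y -> S (x + y)) ->
  (forall (a : int) x, S x -> S (a%:~R *: x)) ->
  (forall j, P j -> S (row j V)) -> forall v, ics V P v -> S v.
Proof.
move=> S0 SD SZ Srow v [z [zP ->]].
apply: (big_ind S) => // j _.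
have [->|nz] := eqVneq (z j) 0; first by rewrite scale0r.
by apply: SZ; apply: Srow; apply: zP.
Qed.

Lemma ics0 (R : realType) (n : nat) (V : 'M[R]_n) P : ics V P 0.
Proof. by exists (fun _ => 0); split => [j|]; rewrite ?eqxx // big1 // => j _; rewrite scale0r. Qed.

Lemma icsD (R : realType) (n : nat) (V : 'M[R]_n) P x y :
  ics V P x -> ics V P y -> ics V P (x + y).
Proof.
move=> [z1 [P1 ->]] [z2 [P2 ->]]; exists (fun j => z1 j + z2 j); split.
  move=> j; have [e1|/P1 //] := eqVneq (z1 j) 0.
  by rewrite e1 add0r => /P2.
by rewrite -big_split /=; apply: eq_bigr => j _; rewrite intrD scalerDl.
Qed.

Lemma icsZ (R : realType) (n : nat) (V : 'M[R]_n) P (a : int) x :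
  ics V P x -> ics V P (a%:~R *: x).
Proof.
move=> [z [Pz ->]]; exists (fun j => a * z j); split.
  by move=> j; rewrite mulf_eq0 negb_or => /andP[_ /Pz].
by rewrite scaler_sumr; apply: eq_bigr => j _; rewrite intrM scalerA.
Qed.

Lemma icsN (R : realType) (n : nat) (V : 'M[R]_n) P x : ics V P x -> ics V P (- x).
Proof. by move=> h; rewrite -scaleN1r -[-1 : R]/((-1 : int)%:~R); apply: icsZ. Qed.

Lemma icsB (R : realType) (n : nat) (V : 'M[R]_n) P x y :
  ics V P x -> ics V P y -> ics V P (x - y).
Proof. by move=> hx hy; apply: icsD => //; apply: icsN. Qed.

Lemma ics_row (R : realType) (n : nat) (V : 'M[R]_n) (P : pred 'I_n) j : P j -> ics V P (row j V).
Proof.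
move=> Pj; exists (fun i => (i == j)%:Z); split.
  move=> i /=. by case: (@eqP _ i j) => [->|].
rewrite (bigD1 j) //= eqxx scale1r big1 ?addr0 // => i /negPf ->.
by rewrite scale0r.
Qed.

Lemma ics_mono (R : realType) (n : nat) (V : 'M[R]_n) (P Q : pred 'I_n) x :
  (forall j, P j -> Q j) -> ics V P x -> ics V Q x.
Proof. by move=> PQ [z [Pz ->]]; exists z; split => // j /Pz /PQ. Qed.

Lemma ics_trans (R : realType) (n : nat) (V W : 'M[R]_n) (P : pred 'I_n) (Q : pred 'I_n) x :
  (forall j, P j -> ics W Q (row j V)) -> ics V P x -> ics W Q x.
Proof.
move=> h; apply: ics_ind => //; [exact: ics0|exact: icsD|exact: icsZ].
Qed.

Definition Basis (R : realType) (n : nat) (B V : 'M[R]_n) : Prop :=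
  row_free V /\ (forall s, icomb B (row s V)) /\ (forall v, icomb B v -> icomb V v).

Lemma ics_submx (R : realType) (n : nat) (V : 'M[R]_n) P x : ics V P x -> (x <= V)%MS.
Proof.
move=> [z [_ ->]]; apply: summx_sub => j _; apply: scalemx_sub; exact: row_sub.
Qed.

Lemma basis_transfer (R : realType) (n : nat) (B V V' : 'M[R]_n) :
  Basis B V -> (forall s, icomb V (row s V')) -> (forall s, icomb V' (row s V)) ->
  Basis B V'.
Proof.
move=> [fV [VB BV]] h1 h2; split; [|split].
- have sub : (V <= V')%MS by apply/row_subP => s; apply: ics_submx (h2 s).
  rewrite -row_leq_rank; move: fV; rewrite -row_leq_rank => fV.
  exact: leq_trans fV (mxrankS sub).
- move=> s; apply: ics_trans (h1 s) => j _; exact: VB.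
- move=> v /BV; apply: ics_trans => j _; exact: h2.
Qed.

Lemma lattice_icomb (R : realType) (n : nat) (B : 'M[R]_n) v :
  lattice B v <-> icomb B v.
Proof.
split.
  move=> [z ->]; exists (fun j => z 0 j); split => //.
  by rewrite mulmx_sum_row; apply: eq_bigr => j _; rewrite mxE.
move=> [z [_ ->]]; exists (\row_j z j).
by rewrite mulmx_sum_row; apply: eq_bigr => j _; rewrite !mxE.
Qed.
Lemma N1_ge0 (R : realType) n (v : 'rV[R]_n) : 0 <= N1 v.
Proof. by apply: sumr_ge0 => i _. Qed.

Lemma N1D (R : realType) n (x y : 'rV[R]_n) : N1 (x + y) <= N1 x + N1 y.
Proof.
rewrite /N1 -big_split /=; apply: ler_sum => i _; rewrite mxE; exact: ler_normD.
Qed.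

Lemma N1Z (R : realType) n (a : R) (x : 'rV[R]_n) : N1 (a *: x) = `|a| * N1 x.
Proof.
rewrite /N1 mulr_sumr; apply: eq_bigr => i _; by rewrite mxE normrM.
Qed.

Lemma N1N (R : realType) n (x : 'rV[R]_n) : N1 (- x) = N1 x.
Proof. by rewrite -scaleN1r N1Z normrN normr1 mul1r. Qed.

Lemma N1_sum (R : realType) n (I : finType) (F : I -> 'rV[R]_n) :
  N1 (\sum_i F i) <= \sum_i N1 (F i).
Proof.
apply: (big_ind2 (fun x y => N1 x <= y)) => //.
  by rewrite /N1 big1 // => i _; rewrite mxE normr0.
by move=> x1 x2 y1 y2 h1 h2; apply: le_trans (N1D _ _) (lerD h1 h2).
Qed.

Lemma euclid_ge0 (R : realType) n (v : 'rV[R]_n) : 0 <= euclid v.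
Proof. exact: sqrtr_ge0. Qed.

Lemma coord_le_euclid (R : realType) n (v : 'rV[R]_n) i : `|v 0 i| <= euclid v.
Proof.
rewrite /euclid -sqrtr_sqr ler_sqrt; last by apply: sumr_ge0 => j _; apply: sqr_ge0.
rewrite (bigD1 i) //= lerDl; apply: sumr_ge0 => j _; exact: sqr_ge0.
Qed.

Lemma euclid_le_N1 (R : realType) n (v : 'rV[R]_n) : euclid v <= N1 v.
Proof.
rewrite /euclid -(ger0_norm (N1_ge0 v)) -sqrtr_sqr ler_sqrt; last exact: sqr_ge0.
rewrite expr2 /N1 mulr_suml; apply: ler_sum => i _.
rewrite -(real_normK (num_real (v 0 i))) expr2 ler_wpM2l //.
by rewrite (bigD1 i) //= lerDl; apply: sumr_ge0.
Qed.

Lemma N1_le_euclid (R : realType) n (v : 'rV[R]_n) : N1 v <= n%:R * euclid v.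
Proof.
have -> : n%:R * euclid v = \sum_(i < n) euclid v by rewrite sumr_const card_ord mulr_natl.
rewrite /N1; apply: ler_sum => i _.
exact: coord_le_euclid.
Qed.

Lemma row_free_prefix (R : realType) n k i (le : (i <= k)%N) (w : 'I_k -> 'rV[R]_n) :
  row_free (\matrix_(j < k) w j) -> row_free (\matrix_(j < i) w (widen_ord le j)).
Proof.
move=> fr; apply/inj_row_free => v hv.
pose v' : 'rV[R]_k := \row_(j < k) (if (insub (val j) : option 'I_i) is Some j' then v 0 j' else 0).
have e : v' *m (\matrix_(j < k) w j) = v *m (\matrix_(j < i) w (widen_ord le j)).
  rewrite !mulmx_sum_row (bigID (fun j : 'I_k => (j < i)%N)) /= [X in _ + X]big1 ?addr0.
    rewrite (big_ord_narrow le); apply: eq_bigr => j _; rewrite !rowK mxE.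
    case: insubP => [j' _ ej'|]; last by rewrite /= ltn_ord.
    by have -> : j' = j by apply: val_inj; rewrite ej'.
  move=> j hj; rewrite mxE; case: insubP => [j' hj'|]; last by rewrite scale0r.
  by rewrite hj' in hj.
have v'0 : v' = 0 by apply: (row_free_inj fr); rewrite e hv !mul0mx.
apply/matrixP => a j; rewrite (ord1 a) mxE.
have := congr1 (fun m : 'rV[R]_k => m 0 (widen_ord le j)) v'0; rewrite !mxE.
case: insubP => [j' _ ej'|]; last by rewrite /= ltn_ord.
by have -> : j' = j by apply: val_inj; rewrite ej'.
Qed.

Lemma discrete (R : realType) n (B : 'M[R]_n) : B \in unitmx ->
  exists2 eps : R, 0 < eps & forall v, icomb B v -> v != 0 -> eps <= euclid v.
Proof.
move=> uB.
pose S : R := 1 + \sum_i \sum_j `|invmx B i j|.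
have S0 : 0 <= \sum_i \sum_j `|invmx B i j| by do 2 (apply: sumr_ge0 => ? _).
have S_gt0 : 0 < S by rewrite /S; lra.
have Sb : forall i j, `|invmx B i j| <= S.
  move=> i j; rewrite /S (bigD1 i) //= (bigD1 j) //=.
  have : 0 <= \sum_(j0 | j0 != j) `|invmx B i j0| by apply: sumr_ge0.
  have : 0 <= \sum_(i0 | i0 != i) \sum_j `|invmx B i0 j| by do 2 (apply: sumr_ge0 => ? _).
  lra.
have n0 : 0 <= (n%:R : R) by [].
exists ((n%:R + 1) * S)^-1; first by rewrite invr_gt0 mulr_gt0 //; lra.
move=> v [z [_ Ev]] nz.
have [j zj] : exists j, z j != 0.
  case: (pickP (fun j => z j != 0)) => [j hj|h]; first by exists j.
  exfalso; move/negP: nz; apply; rewrite Ev big1 // => i _.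
  by move: (h i) => /negbFE/eqP ->; rewrite scale0r.
pose zr : 'rV[R]_n := \row_j (z j)%:~R.
have vz : v = zr *m B by rewrite Ev mulmx_sum_row; apply: eq_bigr => i _; rewrite mxE.
have zv : zr = v *m invmx B by rewrite vz mulmxK.
have h1 : 1 <= `|zr 0 j|.
  by rewrite mxE; apply: norm_intr_ge1; [exact: intr_int | rewrite intr_eq0].
have h2 : `|zr 0 j| <= N1 v * S.
  rewrite zv mxE /N1 mulr_suml; apply: le_trans (ler_norm_sum _ _ _) _.
  by apply: ler_sum => i _; rewrite normrM ler_wpM2l.
have h3 := N1_le_euclid v.
have e0 := euclid_ge0 v.
have h4 : 1 <= ((n%:R + 1) * S) * euclid v.
  apply: (le_trans h1); apply: (le_trans h2).
  have h5 : N1 v <= (n%:R + 1) * euclid v by rewrite mulrDl mul1r; lra.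
  rewrite -mulrA [S * _]mulrC mulrA; apply: ler_wpM2r => //; exact: ltW.
rewrite -[X in X <= _]mulr1 ler_pdivrMl // mulr_gt0 //; lra.
Qed.

Definition Sset (R : realType) n (L : set 'rV[R]_n) k : set R :=
  [set r : R | 0 < r /\
        exists w : 'I_k -> 'rV[R]_n,
          (forall i, L (w i) /\ euclid (w i) < r) /\
          row_free (\matrix_(i < k) w i)].

Lemma row_free_row_neq0 (R : realType) n k (M : 'M[R]_(k, n)) i :
  row_free M -> row i M != 0.
Proof.
move=> fr; apply/eqP => h.
have := @row_free_inj _ 1 _ _ _ fr (delta_mx 0 i) 0.
rewrite -rowE h mul0mx => /(_ erefl) /matrixP /(_ 0 i).
by rewrite !mxE !eqxx /= => /eqP; rewrite oner_eq0.
Qed.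

Lemma Sset_ne (R : realType) n (B : 'M[R]_n) k : B \in unitmx -> (k <= n)%N ->
  Sset (lattice B) k !=set0.
Proof.
move=> uB hk.
have fB : row_free (\matrix_(j < n) (fun j : 'I_n => row j B) j).
  have -> : \matrix_(j < n) (fun j : 'I_n => row j B) j = B.
    by apply/matrixP => a b; rewrite !mxE.
  by rewrite row_free_unit.
have e0 : forall j, 0 <= euclid (row j B) by move=> j; exact: euclid_ge0.
exists (1 + \sum_j euclid (row j B)); split.
  have : 0 <= \sum_j euclid (row j B) by apply: sumr_ge0.
  lra.
exists (fun i => row (widen_ord hk i) B); split; last exact: row_free_prefix fB.
move=> i; split; first by apply/lattice_icomb; apply: ics_row.
rewrite (bigD1 (widen_ord hk i)) //=.
have : 0 <= \sum_(j | j != widen_ord hk i) euclid (row j B) by apply: sumr_ge0.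
lra.
Qed.

Lemma Sset_lb (R : realType) n (B : 'M[R]_n) k eps :
  (forall v, icomb B v -> v != 0 -> eps <= euclid v) -> (0 < k)%N ->
  forall r, Sset (lattice B) k r -> eps <= r.
Proof.
move=> hd k0 r [_ [w [hw fw]]].
have := row_free_row_neq0 (Ordinal k0) fw; rewrite rowK => nz.
have [/lattice_icomb Lw lt] := hw (Ordinal k0).
exact: le_trans (hd _ Lw nz) (ltW lt).
Qed.

Lemma lam_ge (R : realType) n (B : 'M[R]_n) k eps : B \in unitmx ->
  (forall v, icomb B v -> v != 0 -> eps <= euclid v) -> (0 < k)%N -> (k <= n)%N ->
  eps <= succ_min (lattice B) k.
Proof.
move=> uB hd k0 kn; apply: lb_le_inf; first exact: Sset_ne.
move=> r; exact: Sset_lb hd k0 r.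
Qed.

Lemma lam_mono (R : realType) n (B : 'M[R]_n) i k : B \in unitmx ->
  (i <= k)%N -> (k <= n)%N -> succ_min (lattice B) i <= succ_min (lattice B) k.
Proof.
move=> uB ik kn; apply: lb_le_inf; first exact: Sset_ne.
move=> r [r0 [w [hw fw]]].
apply: ge_inf; first by exists 0 => x [x0 _]; exact: ltW.
split => //; exists (fun j => w (widen_ord ik j)); split.
  by move=> j; apply: hw.
exact: row_free_prefix fw.
Qed.

Lemma approx (R : realType) n (B : 'M[R]_n) k eps : B \in unitmx -> 0 < eps ->
  (forall v, icomb B v -> v != 0 -> eps <= euclid v) -> (0 < k)%N -> (k <= n)%N ->
  exists w : 'I_k -> 'rV[R]_n,
    (forall i, lattice B (w i) /\ euclid (w i) < 2 * succ_min (lattice B) k) /\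
    row_free (\matrix_(i < k) w i).
Proof.
move=> uB e0 hd k0 kn.
have hl := lam_ge uB hd k0 kn.
have : succ_min (lattice B) k < 2 * succ_min (lattice B) k by lra.
move=> /(inf_lt (Sset_ne uB kn)) [r [_ [w [hw fw]]] lt].
exists w; split => // i; have [? ?] := hw i; split => //; exact: lt_trans lt.
Qed.

Definition Mk (R : realType) n (f : nat -> 'rV[R]_n) m : 'M[R]_n :=
  \matrix_(i < n) (if (i < m)%N then f i else 0).

Lemma select (R : realType) n (B : 'M[R]_n) eps : B \in unitmx -> 0 < eps ->
  (forall v, icomb B v -> v != 0 -> eps <= euclid v) ->
  exists W : 'M[R]_n, row_free W /\
    forall k : 'I_n, icomb B (row k W) /\ euclid (row k W) < 2 * succ_min (lattice B) k.+1.
Proof.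
move=> uB e0 hd.
suff : forall m, (m <= n)%N -> exists f : nat -> 'rV[R]_n,
    (forall i, (i < m)%N -> icomb B (f i) /\ euclid (f i) < 2 * succ_min (lattice B) i.+1)
    /\ \rank (Mk f m) = m.
  move=> /(_ n (leqnn n)) [f [hf rk]]; exists (Mk f n); split.
    by rewrite -row_leq_rank rk.
  by move=> k; rewrite rowK ltn_ord; apply: hf.
elim=> [_|m IH Sm].
  exists (fun _ => 0); split => // ; apply/eqP; rewrite mxrank_eq0; apply/eqP.
  by apply/matrixP => i j; rewrite !mxE.
have [f [hf rk]] := IH (ltnW Sm).
have [w [hw fw]] := approx uB e0 hd (ltn0Sn m) Sm.
have [j nj] : exists j, ~~ (w j <= Mk f m)%MS.
  apply/existsP; apply: contraT; rewrite negb_exists => /forallP /= h.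
  have sub : (\matrix_(i < m.+1) w i <= Mk f m)%MS.
    by apply/row_subP => i; rewrite rowK; move: (h i); rewrite negbK.
  have := mxrankS sub; rewrite rk.
  by move: fw; rewrite -row_leq_rank => /leq_trans h1 /h1; rewrite ltnn.
pose f' i := if i == m then w j else f i.
have mn : (m < n)%N := Sm.
have sa : (Mk f m <= Mk f' m.+1)%MS.
  apply/row_subP => i; rewrite rowK; case: ifP => [im|_]; last exact: sub0mx.
  have -> : f i = row i (Mk f' m.+1).
    by rewrite rowK /f' ltnS ltnW // (ltn_eqF im).
  exact: row_sub.
have sb : (w j <= Mk f' m.+1)%MS.
  have -> : w j = row (Ordinal mn) (Mk f' m.+1) by rewrite rowK /= ltnSn /f' eqxx.
  exact: row_sub.
have sc : (Mk f' m.+1 <= Mk f m + w j)%MS.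
  apply/row_subP => i; rewrite rowK /f'; case: ifP => [im|_]; last exact: sub0mx.
  case: eqP => [_|ne]; first exact: addsmxSr.
  have -> : f i = row i (Mk f m).
    by rewrite rowK; move: im; rewrite ltnS leq_eqVlt => /orP[/eqP|->].
  exact: (submx_trans (row_sub _ _) (addsmxSl _ _)).
exists f'; split.
  move=> i; rewrite ltnS leq_eqVlt /f' => /orP[/eqP ->|im].
    by rewrite eqxx; have [/lattice_icomb ? ?] := hw j.
  by rewrite (ltn_eqF im); apply: hf.
apply/eqP; rewrite eqn_leq; apply/andP; split.
  have := mxrankS sc; have := mxrank_sum_cap (Mk f m) (w j); rewrite rk.
  have := rank_leq_row (w j); lia.
have := mxrank_leqif_sup sa; move/leqifP; rewrite rk.
case: ifP => // sba _.
by case/negP: nj; apply: submx_trans sb sba.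
Qed.

Lemma alg1 (R : comRingType) (a b u v P Q : R) : a*u + b*v = 1 -> P = u*(a*P + b*Q) - b*(-v*P + u*Q).
Proof. move=> h. rewrite -{1}[P]mul1r -h. ring. Qed.
Lemma alg2 (R : comRingType) (a b u v P Q : R) : a*u + b*v = 1 -> Q = v*(a*P + b*Q) + a*(-v*P + u*Q).
Proof. move=> h. rewrite -{1}[Q]mul1r -h. ring. Qed.

Lemma ics_sum (R : realType) n (V : 'M[R]_n) (P : pred 'I_n) (Q : pred 'I_n) (z : 'I_n -> int) :
  (forall j, Q j -> z j != 0 -> P j) ->
  ics V P (\sum_(j | Q j) (z j)%:~R *: row j V).
Proof.
move=> h; apply: (big_ind (ics V P)); [exact: ics0|exact: icsD|].
move=> j Qj; have [->|nz] := eqVneq (z j) 0; first by rewrite scale0r; exact: ics0.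
by apply: icsZ; apply: ics_row; apply: h.
Qed.

Lemma bezout_step (R : realType) n (B V : 'M[R]_n) (a b : 'I_n) (z : 'I_n -> int) (P : pred 'I_n) :
  Basis B V -> a != b -> z b != 0 -> (forall j, z j != 0 -> P j) -> P a ->
  exists V' : 'M[R]_n, Basis B V' /\ (forall j, j != a -> j != b -> row j V' = row j V) /\
  ics V' (fun j => P j && (j != b)) (\sum_j (z j)%:~R *: row j V).
Proof.
move=> bV ab zb zP Pa.
pose g := gcdz (z a) (z b).
have g0 : g != 0 by rewrite gcdz_eq0 negb_and zb orbT.
have [u [v huv]] := Bezoutz (z a) (z b).
have [al ea] : exists al, al * g = z a by exists (z a %/ g)%Z; exact: divzK (dvdz_gcdl _ _).
have [be eb] : exists be, be * g = z b by exists (z b %/ g)%Z; exact: divzK (dvdz_gcdr _ _).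
rewrite -/g in huv; clearbody g.
have h1 : al * u + be * v = 1.
  apply: (mulIf g0); rewrite mul1r; rewrite -[in RHS]huv -ea -eb; ring.
have h1R : (al%:~R * u%:~R + be%:~R * v%:~R : R) = 1 by rewrite -!intrM -intrD h1.
pose p := row a V; pose q := row b V.
pose p' := al%:~R *: p + be%:~R *: q; pose q' := (-v)%:~R *: p + u%:~R *: q.
pose V' := \matrix_(i < n) (if i == a then p' else if i == b then q' else row i V).
have ra : row a V' = p' by rewrite rowK eqxx.
have rb : row b V' = q' by rewrite rowK eq_sym (negPf ab) eqxx.
have ro : forall j, j != a -> j != b -> row j V' = row j V.
  by move=> j ja jb; rewrite rowK (negPf ja) (negPf jb).
exists V'; split; [|split => //].
- apply: (basis_transfer bV).
  + move=> s; case: (eqVneq s a) => [->|sa].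
      by rewrite ra; apply: icsD; apply: icsZ; apply: ics_row.
    case: (eqVneq s b) => [->|sb]; first by rewrite rb; apply: icsD; apply: icsZ; apply: ics_row.
    by rewrite ro //; apply: ics_row.
  + move=> s; case: (eqVneq s a) => [->|sa].
      have -> : row a V = u%:~R *: row a V' - be%:~R *: row b V'.
        apply/matrixP => i j; rewrite ra rb /p' /q' /p /q !mxE intrN.
        exact: alg1.
      by apply: icsB; apply: icsZ; apply: ics_row.
    case: (eqVneq s b) => [->|sb].
      have -> : row b V = v%:~R *: row a V' + al%:~R *: row b V'.
        apply/matrixP => i j; rewrite ra rb /p' /q' /p /q !mxE intrN.
        exact: alg2.
      by apply: icsD; apply: icsZ; apply: ics_row.
    by rewrite -ro //; apply: ics_row.
- have ex : \sum_j (z j)%:~R *: row j V = g%:~R *: row a V' +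
      \sum_(j | (j != a) && (j != b)) (z j)%:~R *: row j V'.
    rewrite (bigD1 a) //= (bigD1 b) /=; last by rewrite eq_sym.
    rewrite addrA; congr (_ + _); last first.
      by apply: eq_bigr => j /andP[ja jb]; rewrite ro.
    rewrite ra /p' scalerDr !scalerA -!intrM [g * al]mulrC [g * be]mulrC ea eb.
    by rewrite -/p -/q.
  rewrite ex; apply: icsD.
    by apply: icsZ; apply: ics_row; rewrite Pa ab.
  apply: ics_sum => j /andP[_ jb] /zP Pj; by rewrite Pj jb.
Qed.

Lemma ics_same (R : realType) n (V V' : 'M[R]_n) (P : pred 'I_n) x :
  (forall j, P j -> row j V = row j V') -> ics V P x -> ics V' P x.
Proof. by move=> h; apply: ics_trans => j Pj; rewrite h //; apply: ics_row. Qed.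

Lemma triang (R : realType) n (B W : 'M[R]_n) :
  Basis B B -> (forall k, icomb B (row k W)) ->
  exists V, Basis B V /\ forall k : 'I_n, ics V (fun j => (j <= k)%N) (row k W).
Proof.
move=> bB hW.
suff : forall m, (m <= n)%N -> exists V, Basis B V /\
    forall k : 'I_n, (k < m)%N -> ics V (fun j => (j <= k)%N) (row k W).
  by move=> /(_ n (leqnn n)) [V [bV h]]; exists V; split => // k; apply: h.
elim=> [_|m IH Sm]; first by exists B.
have [V [bV hV]] := IH (ltnW Sm).
pose km : 'I_n := Ordinal Sm.
have inner : forall d, (d <= n)%N -> exists V', Basis B V' /\
    (forall j : 'I_n, (j < m)%N -> row j V' = row j V) /\
    ics V' (fun j => (j <= m)%N || (j < n - d)%N) (row km W).
  elim=> [_|d IHd Sd].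
    exists V; split => //; split => //.
    have [_ [_ h]] := bV; apply: ics_mono (h _ (hW km)) => j _.
    by rewrite subn0 ltn_ord orbT.
  have [V' [bV' [same [z [zP ez]]]]] := IHd (ltnW Sd).
  have pn : (n - d.+1 < n)%N by lia.
  pose pi : 'I_n := Ordinal pn.
  have [pm|pm] := leqP (n - d.+1) m.
    exists V'; split => //; split => //; rewrite ez; exists z; split => // j /zP.
    by move=> /orP[->//|h]; apply/orP; left; lia.
  have [zp|zp] := eqVneq (z pi) 0.
    exists V'; split => //; split => //; rewrite ez; exists z; split => // j zj.
    have jp : j != pi by apply: contraNneq zj => ->; rewrite zp.
    have jp' : (nat_of_ord j != n - d.+1)%N by [].
    move: (zP j zj) => /orP[->//|h]; apply/orP; right; lia.
  have kp : km != pi by rewrite -val_eqE /=; lia.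
  have Pk : ((km <= m)%N || (km < n - d)%N) by rewrite /= leqnn.
  have [V'' [bV'' [same' hx]]] :=
    bezout_step (P := fun j => (j <= m)%N || (j < n - d)%N) bV' kp zp zP Pk.
  exists V''; split => //; split.
    move=> j jm; rewrite same' ?same //.
      by rewrite -val_eqE /=; lia.
    by rewrite -val_eqE /=; lia.
  rewrite ez; apply: ics_mono hx => j /andP[/orP[->//|h] jp].
  have jp' : (nat_of_ord j != n - d.+1)%N by [].
  apply/orP; right; lia.
have [V' [bV' [same hx]]] := inner n (leqnn n).
exists V'; split => // k; rewrite ltnS leq_eqVlt => /orP[/eqP ek|km'].
  have -> : k = km by apply: val_inj.
  by apply: ics_mono hx => j /orP[//|]; rewrite subnn.
apply: ics_same (hV k km') => j jk; rewrite same //; exact: leq_ltn_trans jk km'.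
Qed.

Definition rs (R : realType) n (W : 'M[R]_n) (P : pred 'I_n) (x : 'rV[R]_n) : Prop :=
  exists c : 'I_n -> R, (forall j, c j != 0 -> P j) /\ x = \sum_j c j *: row j W.

Lemma rs0 (R : realType) n (W : 'M[R]_n) P : rs W P 0.
Proof. by exists (fun _ => 0); split => [j|]; rewrite ?eqxx // big1 // => j _; rewrite scale0r. Qed.

Lemma rsD (R : realType) n (W : 'M[R]_n) P x y : rs W P x -> rs W P y -> rs W P (x + y).
Proof.
move=> [c1 [P1 ->]] [c2 [P2 ->]]; exists (fun j => c1 j + c2 j); split.
  move=> j; have [e1|/P1 //] := eqVneq (c1 j) 0.
  by rewrite e1 add0r => /P2.
by rewrite -big_split /=; apply: eq_bigr => j _; rewrite scalerDl.
Qed.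

Lemma rsZ (R : realType) n (W : 'M[R]_n) P (a : R) x : rs W P x -> rs W P (a *: x).
Proof.
move=> [c [Pc ->]]; exists (fun j => a * c j); split.
  by move=> j; rewrite mulf_eq0 negb_or => /andP[_ /Pc].
by rewrite scaler_sumr; apply: eq_bigr => j _; rewrite scalerA.
Qed.

Lemma coeffs (R : realType) n (V W : 'M[R]_n) : row_free W ->
  (forall k : 'I_n, ics V (fun j => (j <= k)%N) (row k W)) ->
  forall k : 'I_n, exists c : 'I_n -> R, (forall j, c j != 0 -> (j <= k)%N) /\
    `|c k| <= 1 /\ row k V = \sum_j c j *: row j W.
Proof.
move=> fW hV.
suff H : forall m (k : 'I_n), (k < m)%N -> exists c : 'I_n -> R,
    (forall j, c j != 0 -> (j <= k)%N) /\ `|c k| <= 1 /\ row k V = \sum_j c j *: row j W.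
  by move=> k; apply: (H k.+1).
elim=> [//|m IH k km].
case: (ltnP k m) => [lt|ge]; first exact: IH.
have IH' : forall j : 'I_n, (j < k)%N -> rs W (fun i => (i < k)%N) (row j V).
  move=> j jk; have [c [cs [_ ce]]] := IH j (leq_trans jk km).
  by exists c; split => // i /cs ik; exact: leq_ltn_trans ik jk.
have [z [zs ez]] := hV k.
pose y := \sum_(j | j != k) (z j)%:~R *: row j V.
have hy : rs W (fun i => (i < k)%N) y.
  apply: (big_ind (rs W _)); [exact: rs0|exact: rsD|].
  move=> j jk; have [->|nz] := eqVneq (z j) 0; first by rewrite scale0r; exact: rs0.
  apply: rsZ; apply: IH'; rewrite ltn_neqAle zs // andbT; exact: jk.
have ek : row k W = (z k)%:~R *: row k V + y by rewrite ez (bigD1 k).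
have [d [ds ed]] := hy.
have dk : d k = 0 by case: (eqVneq (d k) 0) => // /ds; rewrite ltnn.
have zk : z k != 0.
  apply/eqP => zk0.
  have e1 : delta_mx 0 k *m W = (\row_j d j) *m W.
    rewrite -rowE ek zk0 scale0r add0r ed mulmx_sum_row.
    by apply: eq_bigr => j _; rewrite mxE.
  have := row_free_inj fW e1 => /matrixP /(_ 0 k).
  by rewrite !mxE !eqxx dk /= => /eqP; rewrite oner_eq0.
pose zr := ((z k)%:~R : R).
have zr0 : zr != 0 by rewrite intr_eq0.
exists (fun i => zr^-1 * ((i == k)%:R - d i)); split; [|split].
- move=> i; rewrite mulf_eq0 negb_or => /andP[_]; case: (eqVneq i k) => [->//|ik] /=.
  by rewrite mulr0n sub0r oppr_eq0 => /ds /ltnW.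
- rewrite eqxx dk subr0 mulr1 normfV invf_le1; last by rewrite normr_gt0.
  by apply: norm_intr_ge1; [exact: intr_int | rewrite intr_eq0].
- have sd : \sum_i ((i == k)%:R *: row i W) = row k W.
    rewrite (bigD1 k) //= eqxx scale1r big1 ?addr0 // => i /negPf ->.
    by rewrite scale0r.
  transitivity (zr^-1 *: (row k W - y)).
    by rewrite ek addrK scalerA mulVf // scale1r.
  rewrite ed -[X in X - _]sd -sumrB scaler_sumr; apply: eq_bigr => i _.
  by rewrite -scalerBl scalerA.
Qed.

Lemma unitri (R : realType) n (B A A' : 'M[R]_n) :
  Basis B A' -> (forall k : 'I_n, ics A' (fun j => (j < k)%N) (row k A - row k A')) ->
  Basis B A.
Proof.
move=> bA' h; apply: (basis_transfer bA').
  move=> s; rewrite -[row s A](subrK (row s A')); apply: icsD.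
    exact: ics_mono (h s).
  exact: ics_row.
suff H : forall m (k : 'I_n), (k < m)%N -> icomb A (row k A').
  by move=> s; apply: (H s.+1).
elim=> [//|m IH k km].
have -> : row k A' = row k A - (row k A - row k A') by rewrite opprB addrCA subrr addr0.
apply: icsB; first exact: ics_row.
apply: ics_trans (h k) => j jk; apply: IH; exact: leq_trans jk km.
Qed.

Lemma unitri2 (R : realType) n (B A A' : 'M[R]_n) :
  Basis B A -> (forall k : 'I_n, ics A' (fun j => (j < k)%N) (row k A - row k A')) ->
  Basis B A'.
Proof.
move=> bA h; apply: (basis_transfer bA); last first.
  move=> s; rewrite -[row s A](subrK (row s A')); apply: icsD.
    exact: ics_mono (h s).
  exact: ics_row.
suff H : forall m (k : 'I_n), (k < m)%N -> icomb A (row k A').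
  by move=> s; apply: (H s.+1).
elim=> [//|m IH k km].
have -> : row k A' = row k A - (row k A - row k A') by rewrite opprB addrCA subrr addr0.
apply: icsB; first exact: ics_row.
apply: ics_trans (h k) => j jk; apply: IH; exact: leq_trans jk km.
Qed.

Lemma size_reduce (R : realType) n (B V W : 'M[R]_n) : row_free W -> Basis B V ->
  (forall k : 'I_n, ics V (fun j => (j <= k)%N) (row k W)) ->
  exists V', Basis B V' /\
    forall k : 'I_n, N1 (row k V') <= \sum_(j : 'I_n | (j <= k)%N) N1 (row j W).
Proof.
move=> fW bV hV.
have [C hC] := fin_all_exists (coeffs fW hV).
pose m (k j : 'I_n) : int := if (j < k)%N then Num.floor (C k j) else 0.
pose V' := \matrix_(k < n) (row k V - \sum_j (m k j)%:~R *: row j W).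
exists V'; split.
  apply: (unitri bV) => k; rewrite rowK addrAC subrr add0r; apply: icsN.
  apply: (big_ind (ics V _)); [exact: ics0|exact: icsD|] => j _.
  rewrite /m; case: ifP => jk; last by rewrite scale0r; exact: ics0.
  by apply: icsZ; apply: ics_mono (hV j) => i ij; exact: leq_ltn_trans ij jk.
move=> k; have [cs [ck ce]] := hC k.
have -> : row k V' = \sum_j (C k j - (m k j)%:~R) *: row j W.
  by rewrite rowK ce -sumrB; apply: eq_bigr => j _; rewrite scalerBl.
apply: le_trans (N1_sum _) _; rewrite [X in _ <= X]big_mkcond /=.
apply: ler_sum => j _; rewrite N1Z.
have N0 := N1_ge0 (row j W).
case: ifP => jk.
  rewrite -[X in _ <= X]mul1r; apply: ler_wpM2r => //.
  rewrite /m; case: ifP => jk'.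
    have := floor_itv (C k j); rewrite intrD => /andP[h1 h2].
    rewrite ger0_norm; lra.
  have -> : j = k by apply: val_inj; apply/eqP; rewrite eqn_leq jk leqNgt jk'.
  by rewrite subr0.
have -> : C k j = 0 by case: (eqVneq (C k j) 0) => // /cs; rewrite jk.
rewrite /m; case: ifP => jk'; first by move: jk; rewrite (ltnW jk').
by rewrite subr0 normr0 mul0r.
Qed.

Definition good (R : realType) n (x y : 'rV[R]_n) (m : nat) : bool :=
  [forall h : 'I_n, (x 0 h != 0) ==> (y 0 h + m%:R * x 0 h != 0)].

Lemma good_ex (R : realType) n (x y : 'rV[R]_n) : exists m : 'I_n.+1, good x y m.
Proof.
case: (pickP (fun m : 'I_n.+1 => good x y m)) => [m hm|h]; first by exists m.
exfalso.
have bad : forall m : 'I_n.+1, exists hh : 'I_n,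
    (x 0 hh != 0) && (y 0 hh + (m : nat)%:R * x 0 hh == 0).
  move=> m; move: (h m) => /negbT; rewrite /good negb_forall => /existsP [hh].
  by rewrite negb_imply negbK => H; exists hh.
have [f hf] := fin_all_exists bad.
have inj : injective f.
  move=> m1 m2 e; move: (hf m1) (hf m2) => /andP[x1 /eqP e1] /andP[x2 /eqP e2].
  rewrite e in e1 x1.
  apply: val_inj; apply/eqP; rewrite -(eqr_nat R); apply/eqP.
  apply: (mulIf x2); lra.
by have := leq_card f inj; rewrite !card_ord ltnn.
Qed.

Definition mp (R : realType) n (x y : 'rV[R]_n) : nat := val (xchoose (good_ex x y)).

Lemma mp_good (R : realType) n (x y : 'rV[R]_n) : good x y (mp x y).
Proof. exact: (xchooseP (good_ex x y)). Qed.

Lemma mp_le (R : realType) n (x y : 'rV[R]_n) : (mp x y <= n)%N.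
Proof. by rewrite /mp -ltnS ltn_ord. Qed.

Definition rowv (R : realType) n (V : 'M[R]_n) (i : nat) : 'rV[R]_n :=
  if (insub i : option 'I_n) is Some j then row j V else 0.

Lemma rowvE (R : realType) n (V : 'M[R]_n) (j : 'I_n) : rowv V j = row j V.
Proof. by rewrite /rowv valK. Qed.

Fixpoint gg (R : realType) n (V : 'M[R]_n) (k : nat) : 'rV[R]_n :=
  match k with
  | 0 => rowv V 0
  | k'.+1 => rowv V k'.+1 + (mp (gg V k') (rowv V k'.+1))%:R *: gg V k'
  end.

Lemma nest (R : realType) n (B V : 'M[R]_n) (beta : nat -> R) : Basis B V ->
  (forall k : 'I_n, N1 (row k V) <= beta k) ->
  (forall i k, (i <= k)%N -> (k < n)%N -> beta i <= beta k) -> (forall k, (k < n)%N -> 0 <= beta k) ->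
  exists V'', Basis B V'' /\
    (forall k : 'I_n, N1 (row k V'') <= (n.+1%:R) ^+ k * beta k) /\
    (forall s t : 'I_n, nat_of_ord t = s.+1 -> nzidx (row s V'') `<=` nzidx (row t V'')).
Proof.
move=> bV hb bmono b0.
pose V'' := \matrix_(k < n) gg V k.
have rV : forall k : 'I_n, row k V'' = gg V k by move=> k; rewrite rowK.
exists V''; split; [|split].
- apply: (unitri2 bV) => k; rewrite rV; case: k => [[|k] hk] /=.
    by rewrite -[0%N]/(nat_of_ord (Ordinal hk)) rowvE subrr; exact: ics0.
  rewrite -[k.+1]/(nat_of_ord (Ordinal hk)) rowvE opprD addrA subrr add0r.
  apply: icsN.
  rewrite [X in X *: _](_ : _ = (mp (gg V k) (row (Ordinal hk) V))%:Z%:~R) //.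
  apply: icsZ.
  have hk' : (k < n)%N by exact: ltnW.
  have -> : gg V k = row (Ordinal hk') V'' by rewrite rV.
  by apply: ics_row => /=.
- have H : forall k0, (k0 < n)%N -> N1 (gg V k0) <= (n.+1%:R) ^+ k0 * beta k0.
    elim=> [h0|k IH hk] /=.
      by rewrite expr0 mul1r -[0%N]/(nat_of_ord (Ordinal h0)) rowvE hb.
    have hk' : (k < n)%N by exact: ltnW.
    have IHk := IH hk'.
    apply: le_trans (N1D _ _) _; rewrite N1Z ger0_norm //.
    have h1 : N1 (rowv V k.+1) <= beta k.+1.
      by rewrite -[k.+1]/(nat_of_ord (Ordinal hk)) rowvE hb.
    have h2 : (mp (gg V k) (rowv V k.+1))%:R <= (n%:R : R) by rewrite ler_nat mp_le.
    have P1 : 1 <= (n.+1%:R : R) ^+ k by apply: exprn_ege1; rewrite ler1n.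
    set P := (n.+1%:R : R) ^+ k in IHk P1 *.
    have N0 := N1_ge0 (gg V k).
    have h3 : (mp (gg V k) (rowv V k.+1))%:R * N1 (gg V k) <= n%:R * (P * beta k.+1).
      apply: le_trans (ler_wpM2r N0 h2) _; apply: ler_wpM2l => //.
      apply: le_trans IHk _; apply: ler_wpM2l; [lra | exact: bmono].
    rewrite exprSr -/P.
    have hb1 := b0 k.+1 hk.
    have : (n.+1%:R : R) = n%:R + 1 by rewrite -natr1.
    move=> ->; rewrite mulrDr mulr1 mulrDl.
    have : beta k.+1 <= P * beta k.+1.
      by rewrite -[X in X <= _]mul1r; apply: ler_wpM2r.
    have -> : P * n%:R * beta k.+1 = n%:R * (P * beta k.+1) by ring.
    lra.
  by move=> k; rewrite rV; apply: H.
- move=> s t ets h; rewrite /nzidx /= !rV ets /= => hs.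
  have := mp_good (gg V s) (rowv V s.+1); rewrite /good => /forallP /(_ h).
  by rewrite hs /= !mxE.
Qed.
Unset Implicit Arguments.
Theorem lemma3p2 (R : realType) (n : nat) :
  exists C : R, 0 < C /\
  forall B : 'M[R]_n, B \in unitmx ->
  exists V : 'M[R]_n,
    is_lattice_basis (lattice B) V /\
    (forall s : 'I_n, euclid (row s V) <= C * succ_min (lattice B) s.+1) /\
    (forall s t : 'I_n, nat_of_ord t = s.+1 ->
       nzidx (row s V) `<=` nzidx (row t V)).
Proof.
pose a : R := n.+1%:R.
have a1 : 1 <= a by rewrite /a ler1n.
have a0 : 0 < a by lra.
pose K : R := 2 * (a * a).
have K0 : 0 < K by rewrite /K; apply: mulr_gt0 => //; apply: mulr_gt0.
exists (K * a ^+ n); split; first by apply: mulr_gt0 => //; apply: exprn_gt0.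
move=> B uB.
have [eps e0 hd] := discrete uB.
pose lam k := succ_min (lattice B) k.
have lam0 : forall k, (0 < k)%N -> (k <= n)%N -> 0 <= lam k.
  move=> k k0 kn; have := lam_ge uB hd k0 kn; rewrite /lam; lra.
have bB : Basis B B.
  split; first by rewrite row_free_unit.
  by split => // s; apply: ics_row.
have [W [fW hW]] := select uB e0 hd.
have [V1 [bV1 hV1]] := triang bB (fun k => (hW k).1).
have [V2 [bV2 hV2]] := size_reduce fW bV1 hV1.
pose beta k := K * lam k.+1.
have hb : forall k : 'I_n, N1 (row k V2) <= beta k.
  move=> k; apply: le_trans (hV2 k) _.
  have l0 := lam0 k.+1 (ltn0Sn _) (ltn_ord k).
  pose c := n%:R * (2 * lam k.+1).
  have c0 : 0 <= c by rewrite /c; apply: mulr_ge0 => //; lra.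
  apply: (@le_trans _ _ (\sum_(j : 'I_n) c)).
    rewrite [X in _ <= X](bigID (fun j : 'I_n => (j <= k)%N)) /=.
    have : 0 <= \sum_(j : 'I_n | ~~ (j <= k)%N) c by apply: sumr_ge0.
    have : \sum_(j : 'I_n | (j <= k)%N) N1 (row j W) <= \sum_(j : 'I_n | (j <= k)%N) c.
      apply: ler_sum => j jk; apply: le_trans (N1_le_euclid _) _.
      rewrite /c; apply: ler_wpM2l => //; apply: le_trans (ltW (hW j).2) _.
      apply: ler_wpM2l => //; apply: lam_mono => //; exact: ltn_ord.
    lra.
  rewrite sumr_const card_ord -mulr_natl /beta /K /c /a -natr1.
  have n0 : (0 : R) <= n%:R by [].
  nra.
have [V3 [bV3 [hb3 hn3]]] := nest (beta := beta) bV2 hb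
  (fun i k ik kn => ler_wpM2l (ltW K0) (lam_mono uB (ik : (i.+1 <= k.+1)%N) kn))
  (fun k kn => mulr_ge0 (ltW K0) (lam0 k.+1 (ltn0Sn _) kn)).
exists V3; split; [|split => //].
  have [fV3 [VB BV]] := bV3; split => //; split.
    by move=> s; apply/lattice_icomb.
  by move=> v /lattice_icomb /BV /lattice_icomb.
move=> s; apply: le_trans (euclid_le_N1 _) _; apply: le_trans (hb3 s) _.
have l0 := lam0 s.+1 (ltn0Sn _) (ltn_ord s).
have hP : a ^+ s <= a ^+ n by apply: ler_weXn2l => //; exact: ltnW.
rewrite /beta -/(lam s.+1) [X in _ <= X](_ : _ = a ^+ n * (K * lam s.+1)); last by ring.
apply: ler_wpM2r => //; apply: mulr_ge0 => //; exact: ltW.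
Qed.
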